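(* In the curved-exam game described in the context: (1) For any two pure Nash equilibria $x^*,y^*$, either $x_i^*\le y_i^*$ for all $i$, or $x_i^*\ge y_i^*$ for all $i$. (2) If $x^*,y^*$ are pure Nash equilibria with $x_i^*\le y_i^*$ for all $i$, then $U_i(x^* )\ge U_i(y^* )$ for every student $i$. (3) If $x^{*(k)}$ is a $k$-don't care equilibrium and $x^{*(l)}$ is an $l$-don't care equilibrium with $l>k$, then every student $i$ has a strictly higher grade and at least as much leisure under $x^{*(l)}$ as under $x^{*(k)}$: $G_i(x^{*(l)})>G_i(x^{*(k)})$ and $1-x_i^{*(l)}\ge 1-x_i^{*(k)}$.
   Context: The curved-exam game: fix $n\ge2$, abilities $\alpha_1,\dots,\alpha_n\in(0,1)$, target mean $m\in(0,1)$. Student $i$ chooses $x_i\in[0,1]$; $\bar x=\frac1n\sum_j x_j$, $\bar x_{-i}=\frac1{n-1}\sum_{j\ne i}x_j$. Grade $G_i(x)=x_i+\max(m-\bar x,0)$ (not truncated at 1), leisure $1-x_i$; payoff $U_i(x)=G_i(x)^{\alpha_i}(1-x_i)^{1-\alpha_i}$. Let $\alpha_{(1)}\le\dots\le\alpha_{(n)}$ be the order statistics of the abilities. For $0\le k\le n$, a $k$-don't care equilibrium is a pure Nash equilibrium with an exam curve ($\bar x<m$) in which the $k$ students with the lowest abilities exert zero effort and the other $n-k$ students exert positive effort. *)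

(* Defs.v *)
From HB Require Import structures.
From mathcomp Require Import all_boot all_order all_algebra.
From mathcomp Require Import all_classical all_reals all_analysis.
Set Implicit Arguments. Unset Strict Implicit. Unset Printing Implicit Defensive.
Import Order.TTheory GRing.Theory Num.Theory.
Local Open Scope ring_scope.

Section CurvedExam.
Variables (R : realType) (n : nat).

Definition mean (x : 'I_n -> R) : R := (\sum_(j < n) x j) / n%:R.

(* grade G_i(x) = x_i + max(m - xbar, 0), not truncated *)
Definition grade (m : R) (x : 'I_n -> R) (i : 'I_n) : R :=
  x i + Num.max (m - mean x) 0.

Definition payoff (alpha : 'I_n -> R) (m : R) (x : 'I_n -> R) (i : 'I_n) : R :=
  (grade m x i) `^ (alpha i) * (1 - x i) `^ (1 - alpha i).

Definition deviate (x : 'I_n -> R) (i : 'I_n) (y : R) : 'I_n -> R :=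
  fun j => if j == i then y else x j.

Definition feasible (x : 'I_n -> R) : Prop := forall i, 0 <= x i <= 1.

Definition is_pure_NE (alpha : 'I_n -> R) (m : R) (x : 'I_n -> R) : Prop :=
  feasible x /\
  forall (i : 'I_n) (y : R), 0 <= y <= 1 ->
    payoff alpha m (deviate x i y) i <= payoff alpha m x i.

(* k-don't care equilibrium: pure NE with an exam curve (mean < m) in which
   a set S of k students, all of ability <= that of every student outside S
   (i.e. the k lowest-ability students), exert zero effort while all others
   exert positive effort. *)
Definition k_dont_care_eq (alpha : 'I_n -> R) (m : R) (k : nat)
    (x : 'I_n -> R) : Prop :=
  is_pure_NE alpha m x /\ mean x < m /\
  exists S : {set 'I_n},
    #|S| = k /\
    (forall i j, i \in S -> j \notin S -> alpha i <= alpha j) /\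
    (forall i, i \in S -> x i = 0) /\
    (forall j, j \notin S -> 0 < x j).

End CurvedExam.

(* Main.v *)
Require Import Defs.
From HB Require Import structures.
From mathcomp Require Import all_boot all_order all_algebra.
From mathcomp Require Import all_classical all_reals all_analysis.
From mathcomp Require Import ring lra.
Import Order.TTheory GRing.Theory Num.Theory.
Local Open Scope ring_scope.




Lemma ln_le_sub1 {R : realType} (y : R) : 0 < y -> ln y <= y - 1.
Proof.
move=> y0; have h : 1 + (y - 1) = y by ring.
have := @le_ln1Dx R (y - 1); rewrite h; apply; lra.
Qed.

Lemma powR_exp {R : realType} (a G u : R) : 0 < G -> 0 < u ->
  G `^ a * u `^ (1 - a) = expR (a * ln G + (1 - a) * ln u).
Proof.
move=> G0 u0; rewrite /powR !gt_eqF // expRD; congr (expR _ * expR _); ring.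
Qed.

Lemma improve {R : realType} (a p q x z : R) : 0 < a < 1 -> 0 < p -> x < 1 -> 0 < p * x + q ->
  z < 1 -> 0 < p * z + q ->
  0 < (z - x) * (a * p * (1 - z) - (1 - a) * (p * z + q)) ->
  (p * x + q) `^ a * (1 - x) `^ (1 - a) < (p * z + q) `^ a * (1 - z) `^ (1 - a).
Proof.
move=> /andP[a0 a1] p0 x1 G0 z1 G1 H.
have u0 : 0 < 1 - x by lra.
have u1 : 0 < 1 - z by lra.
rewrite !powR_exp // ltr_expR.
set g0 := p * x + q in G0 *; set g1 := p * z + q in G1 H *.
have h1 := ln_le_sub1 _ (divr_gt0 G0 G1).
have h2 := ln_le_sub1 _ (divr_gt0 u0 u1).
rewrite ln_div ?posrE // in h1; rewrite ln_div ?posrE // in h2.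
have g1n : g1 != 0 by rewrite gt_eqF.
have u1n : 1 - z != 0 by rewrite gt_eqF.
have e : a * (g0 / g1 - 1) + (1 - a) * ((1 - x) / (1 - z) - 1) =
   - ((z - x) * (a * p * (1 - z) - (1 - a) * g1) / (g1 * (1 - z))).
  have eg : g0 = g1 - p * (z - x) by rewrite /g0 /g1; ring.
  rewrite eg; field.
  by rewrite g1n u1n.
have pos : 0 < (z - x) * (a * p * (1 - z) - (1 - a) * g1) / (g1 * (1 - z)).
  by apply: divr_gt0 => //; apply: mulr_gt0.
have k1 : a * (ln g0 - ln g1) <= a * (g0 / g1 - 1) by rewrite ler_wpM2l //; lra.
have k2 : (1 - a) * (ln (1 - x) - ln (1 - z)) <= (1 - a) * ((1 - x) / (1 - z) - 1)
  by rewrite ler_wpM2l //; lra.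
lra.
Qed.



Lemma sum_dev {R : realType} {n} (x : 'I_n -> R) i z :
  \sum_j deviate x i z j = \sum_j x j - x i + z.
Proof.
rewrite (bigD1 i) //= [in RHS](bigD1 i) //= /deviate eqxx.
rewrite (eq_bigr x); first by ring.
by move=> j /negbTE ->.
Qed.

Lemma grade_dev {R : realType} {n} (x : 'I_n -> R) i z m :
  grade m (deviate x i z) i = z + Num.max (m - (\sum_j x j - x i + z) / n%:R) 0.
Proof. by rewrite /grade /mean sum_dev /deviate eqxx. Qed.

Lemma dev_id {R : realType} {n} (x : 'I_n -> R) i : deviate x i (x i) = x.
Proof. by apply/funext => j; rewrite /deviate; case: eqP => // ->. Qed.

Lemma grade_ge0 {R : realType} {n} (x : 'I_n -> R) i m : 0 <= x i -> 0 <= grade m x i.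
Proof.
move=> h; rewrite /grade; apply: addr_ge0 => //.
by rewrite le_max lexx orbT.
Qed.

Lemma NE_pos {R : realType} {n} (alpha : 'I_n -> R) m x i :
  0 < alpha i < 1 -> is_pure_NE alpha m x -> 0 < grade m x i /\ x i < 1.
Proof.
move=> /andP[a0 a1] [feas ne].
have /andP[x0 x1] := feas i.
have hp : 0 < payoff alpha m x i.
  have h := ne i (2^-1) ltac:(apply/andP; split; lra).
  apply: lt_le_trans h; rewrite /payoff.
  apply: mulr_gt0; apply: powR_gt0.
    rewrite grade_dev; have : 0 <= Num.max (m - (\sum_j x j - x i + 2^-1) / n%:R) 0.
      by rewrite le_max lexx orbT.
    lra.
  by rewrite /deviate eqxx; lra.
move: hp; rewrite /payoff.
have g0 : 0 <= grade m x i by apply: grade_ge0.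
split.
  rewrite lt_neqAle g0 andbT; apply/negP => /eqP g; move: hp.
  by rewrite -g powR0 ?mul0r ?ltxx // gt_eqF.
rewrite lt_neqAle x1 andbT; apply/negP => /eqP g; move: hp.
by rewrite g subrr powR0 ?mulr0 ?ltxx // gt_eqF //; lra.
Qed.

Lemma piece {R : realType} {n} (alpha : 'I_n -> R) m x i (a b p q : R) :
  0 < alpha i < 1 -> is_pure_NE alpha m x ->
  0 <= a -> b <= 1 -> a <= x i <= b -> 0 < p ->
  (forall z, a <= z <= b -> grade m (deviate x i z) i = p * z + q) ->
  0 < p * x i + q ->
  (x i < b -> alpha i * p * (1 - x i) <= (1 - alpha i) * (p * x i + q)) /\
  (a < x i -> (1 - alpha i) * (p * x i + q) <= alpha i * p * (1 - x i)).
Proof.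
move=> ha ne a0 b1 /andP[ax xb] p0 hg G0.
have [_ x1] := NE_pos _ _ _ _ ha ne.
have /andP[al au] := ha.
have gx : grade m x i = p * x i + q by rewrite -{1}(dev_id x i) hg ?ax ?xb.
have key : forall z, a <= z <= b -> z < 1 -> 0 < p * z + q ->
    0 < (z - x i) * (alpha i * p * (1 - z) - (1 - alpha i) * (p * z + q)) -> False.
  move=> z /andP[az zb] z1 Gz H.
  have := (ne.2 i z ltac:(apply/andP; split; lra)).
  rewrite /payoff hg ?az ?zb // /deviate eqxx -/(deviate x i z) gx.
  apply/negP; rewrite -ltNge.
  by apply: improve.
set L := alpha i * p * (1 - x i) - (1 - alpha i) * (p * x i + q).
split.
  move=> xb'; rewrite leNgt; apply/negP => hL.
  have Lp : 0 < L by rewrite /L; lra.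
  have [d [d0 [db dL]]] : exists d, 0 < d /\ d <= b - x i /\ 2 * p * d <= L.
    case: (lerP (b - x i) (L / (2 * p))) => h.
      exists (b - x i); split; first lra; split; first lra.
      have : 2 * p * (b - x i) <= 2 * p * (L / (2 * p)) by rewrite ler_wpM2l //; lra.
      have -> : 2 * p * (L / (2 * p)) = L by field; rewrite gt_eqF.
      by [].
    exists (L / (2 * p)); split; first by apply: divr_gt0 => //; lra.
    split; first lra.
    have -> : 2 * p * (L / (2 * p)) = L by field; rewrite gt_eqF.
    by [].
  apply: (key (x i + d)).
  - apply/andP; split; lra.
  - have : 0 < alpha i * p * (1 - (x i + d)).
      have : (1 - alpha i) * (p * (x i + d) + q) > 0.
        apply: mulr_gt0; first lra. nra.
      rewrite /L in dL Lp; nra.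
    move=> h; have : 0 < alpha i * p by apply: mulr_gt0.
    nra.
  - nra.
  - rewrite /L in dL Lp; nra.
move=> ax'; rewrite leNgt; apply/negP => hL.
have Lp : L < 0 by rewrite /L; lra.
have [d [d0 [db dL]]] : exists d, 0 < d /\ d <= x i - a /\ 2 * p * d <= - L.
  case: (lerP (x i - a) (- L / (2 * p))) => h.
    exists (x i - a); split; first lra; split; first lra.
    have : 2 * p * (x i - a) <= 2 * p * (- L / (2 * p)) by rewrite ler_wpM2l //; lra.
    have -> : 2 * p * (- L / (2 * p)) = - L by field; rewrite gt_eqF.
    by [].
  exists (- L / (2 * p)); split; first by apply: divr_gt0 => //; lra.
  split; first lra.
  have -> : 2 * p * (- L / (2 * p)) = - L by field; rewrite gt_eqF.
  by [].
apply: (key (x i - d)).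
- apply/andP; split; lra.
- lra.
- rewrite /L in dL Lp.
  have : 0 < alpha i * p * (1 - (x i - d)).
    apply: mulr_gt0; [by apply: mulr_gt0 | lra].
  have : 0 < 1 - alpha i by lra.
  nra.
- rewrite /L in dL Lp; nra.
Qed.


Definition foc {R : realType} (a p c xi : R) : Prop :=
  a * p * (1 - xi) <= (1 - a) * (xi + c) /\
  (0 < xi -> (1 - a) * (xi + c) <= a * p * (1 - xi)).

Lemma NE_class {R : realType} {n} (alpha : 'I_n -> R) m x i :
  (2 <= n)%N -> 0 < alpha i < 1 -> is_pure_NE alpha m x ->
  (mean x < m -> foc (alpha i) (1 - n%:R^-1) (m - mean x) (x i)) /\
  (m <= mean x -> x i = alpha i).
Proof.
move=> hn ha ne.
have /andP[al au] := ha.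
have [gpos x1] := NE_pos _ _ _ _ ha ne.
have /andP[x0 _] := ne.1 i.
set N := n%:R.
have N2 : 2 <= N by rewrite /N (ler_nat R 2 n).
have N0 : 0 < N by lra.
have Nn : N != 0 by rewrite gt_eqF.
have Ni0 : 0 < N^-1 by rewrite invr_gt0.
have Ni1 : N^-1 < 1 by rewrite invf_lt1 //; lra.
set p := 1 - N^-1.
have p0 : 0 < p by rewrite /p; lra.
set S := \sum_j x j.
set T := S - x i.
have meanE : mean x = S / N by [].
have gd : forall z, grade m (deviate x i z) i = z + Num.max (m - (T + z) / N) 0.
  by move=> z; rewrite grade_dev.
have gx : grade m x i = x i + Num.max (m - S / N) 0 by [].
set q := m - T / N.
have curveE : forall z, z <= N * m - T -> grade m (deviate x i z) i = p * z + q.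
  move=> z hz; rewrite gd max_l; last first.
    have -> : m - (T + z) / N = (N * m - T - z) / N by field.
    by apply: divr_ge0; lra.
  rewrite /p /q; ring.
have flatE : forall z, N * m - T <= z -> grade m (deviate x i z) i = 1 * z + 0.
  move=> z hz; rewrite gd max_r; last first.
    have -> : m - (T + z) / N = (N * m - T - z) / N by field.
    by apply: mulr_le0_ge0; [lra | rewrite invr_ge0; lra].
  ring.
have pxq : p * x i + q = x i + (m - mean x) by rewrite meanE /p /q /T; ring.
split.
  move=> hlt.
  have hS : S < N * m by rewrite mulrC -ltr_pdivrMr // -meanE.
  have := piece _ _ _ _ 0 (Num.min 1 (N * m - T)) p q ha ne (lexx 0) _ _ p0 _ _.
  rewrite pxq; case.
  - by rewrite ge_min lexx.
  - by rewrite x0 le_min ltW //= /T; lra.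
  - move=> z /andP[_]; rewrite le_min => /andP[_ hz]; exact: curveE.
  - lra.
  move=> h1 h2; split.
    by apply: h1; rewrite lt_min x1 /T; lra.
  by move=> xp; apply: h2.
move=> hle.
have hS : N * m <= S by rewrite mulrC -ler_pdivlMr // -meanE.
case: (lerP S (N * m)) => hS'.
  (* mean = m : impossible *)
  have eS : S = N * m by lra.
  have ex : x i = grade m x i.
    by rewrite gx max_r ?addr0 // eS (_ : N * m / N = m) ?subrr //; field.
  have xp : 0 < x i by rewrite ex.
  have := piece _ _ _ _ 0 (x i) p q ha ne (lexx 0) _ _ p0 _ _.
  case.
  - lra.
  - by rewrite x0 lexx.
  - by move=> z /andP[_ hz]; apply: curveE; rewrite /T eS; lra.
  - rewrite pxq; have : mean x = m by rewrite meanE eS; field.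
    lra.
  move=> _ /(_ xp) h1.
  have := piece _ _ _ _ (x i) 1 1 0 ha ne (ltW xp) (lexx 1) _ ltr01 _ _.
  case.
  - by rewrite lexx ltW.
  - by move=> z /andP[hz _]; apply: flatE; rewrite /T; lra.
  - lra.
  move=> /(_ x1) h2 _.
  exfalso.
  have pq : p * x i + q = x i.
    by rewrite /q /T eS /p; field.
  rewrite pq in h1.
  rewrite mul1r mulr1 addr0 in h2.
  have : alpha i * p * (1 - x i) < alpha i * (1 - x i).
    rewrite -mulrA ltr_pM2l //; have : 0 < 1 - x i by lra.
    rewrite /p; nra.
  lra.
have xp : 0 < x i.
  by move: gpos; rewrite gx max_r ?addr0 //; rewrite meanE in hle; lra.
have := piece _ _ _ _ (Num.max 0 (N * m - T)) 1 1 0 ha ne _ (lexx 1) _ ltr01 _ _.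
case.
- by rewrite le_max lexx.
- apply/andP; split; last lra.
  by rewrite ge_max; apply/andP; split; rewrite /T; lra.
- move=> z /andP[]; rewrite ge_max => /andP[_ hz] _; exact: flatE.
- lra.
move=> /(_ x1) h1 /(_ _) h2.
have h2' : (1 - alpha i) * (1 * x i + 0) <= alpha i * 1 * (1 - x i).
  by apply: h2; rewrite gt_max xp /T; lra.
rewrite mul1r mulr1 addr0 in h1 h2'.
lra.
Qed.


Lemma cmp_curve {R : realType} {a p cx cy xi yi : R} :
  foc a p cx xi -> foc a p cy yi -> 0 < a < 1 -> 0 < p -> cy <= cx -> 0 <= yi ->
  xi <= yi.
Proof.
move=> [_ hx] [hy _] /andP[a0 a1] p0 c yi0.
rewrite leNgt; apply/negP => lt.
have := hx ltac:(lra) => {}hx.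
have ap : 0 < a * p by apply: mulr_gt0.
have h1 : (1 - a) * (yi + cy) < (1 - a) * (xi + cx) by rewrite ltr_pM2l; lra.
have h2 : a * p * (1 - xi) < a * p * (1 - yi) by rewrite ltr_pM2l //; lra.
lra.
Qed.

Lemma le_alpha {R : realType} {a p c xi : R} :
  foc a p c xi -> 0 < a < 1 -> 0 < p <= 1 -> 0 < c -> 0 <= xi <= 1 -> xi <= a.
Proof.
move=> [_ hx] /andP[a0 a1] /andP[p0 p1] c0 /andP[x0 x1].
case: (lerP xi 0) => h; first lra.
have := hx h => {}hx.
have h1 : a * p * (1 - xi) <= a * (1 - xi).
  rewrite -mulrA ler_pM2l //; have : 0 <= 1 - xi by lra. nra.
have h2 : (1 - a) * xi < (1 - a) * (xi + c) by rewrite ltr_pM2l; lra.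
nra.
Qed.

Lemma grade_strict {R : realType} {a p ck cl xk xl : R} :
  foc a p ck xk -> foc a p cl xl -> 0 < a < 1 -> 0 < p -> ck < cl ->
  0 <= xl -> xl <= xk -> xk < 1 -> xk + ck < xl + cl.
Proof.
move=> [hk1 hk2] [hl1 hl2] /andP[a0 a1] p0 c xl0 xlk xk1.
have ap : 0 < a * p by apply: mulr_gt0.
case: (lerP xl 0) => hl.
  have e : xl = 0 by lra.
  rewrite e in hl1 *.
  case: (lerP xk 0) => hk; first lra.
  have := hk2 hk => {}hk2.
  have h1 : a * p * (1 - xk) < a * p * (1 - 0) by rewrite ltr_pM2l //; lra.
  have : (1 - a) * (xk + ck) < (1 - a) * (0 + cl) by lra.
  rewrite ltr_pM2l; lra.
have := hl2 hl => {}hl2.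
have := hk2 ltac:(lra) => {}hk2.
case: (lerP xk xl) => e; first lra.
have h1 : a * p * (1 - xk) < a * p * (1 - xl) by rewrite ltr_pM2l //; lra.
have : (1 - a) * (xk + ck) < (1 - a) * (xl + cl) by lra.
rewrite ltr_pM2l; lra.
Qed.

Theorem mainTheorem14 (R : realType) (n : nat) (alpha : 'I_n -> R) (m : R)
  (hn : (2 <= n)%N)
  (halpha : forall i, 0 < alpha i < 1)
  (hm : 0 < m < 1) :
  (* (1) pure Nash equilibria are totally ordered componentwise *)
  (forall x y : 'I_n -> R,
     is_pure_NE alpha m x -> is_pure_NE alpha m y ->
     (forall i, x i <= y i) \/ (forall i, y i <= x i)) /\
  (* (2) higher effort equilibrium gives lower payoff to everyone *)
  (forall x y : 'I_n -> R,
     is_pure_NE alpha m x -> is_pure_NE alpha m y ->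
     (forall i, x i <= y i) ->
     forall i, payoff alpha m y i <= payoff alpha m x i) /\
  (* (3) more don't-care students: strictly higher grades, weakly more leisure *)
  (forall (k l : nat) (xk xl : 'I_n -> R),
     (k < l)%N ->
     k_dont_care_eq alpha m k xk -> k_dont_care_eq alpha m l xl ->
     forall i, grade m xk i < grade m xl i /\ 1 - xk i <= 1 - xl i).
Proof.
set p : R := 1 - n%:R^-1.
have N2 : 2 <= (n%:R : R) by rewrite (ler_nat R 2 n).
have Ni0 : 0 < (n%:R : R)^-1 by rewrite invr_gt0; lra.
have Ni1 : (n%:R : R)^-1 < 1 by rewrite invf_lt1 //; lra.
have p0 : 0 < p by rewrite /p; lra.
have p1 : p <= 1 by rewrite /p; lra.
have cl := fun x i => NE_class alpha m x i hn (halpha i).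
have cmpc : forall x y, is_pure_NE alpha m x -> is_pure_NE alpha m y ->
    mean x < m -> mean y < m -> mean x <= mean y -> forall i, x i <= y i.
  move=> x y nx ny hx hy hxy i.
  have /andP[y0 _] := ny.1 i.
  have h1 := (cl x i nx).1 hx. have h2 := (cl y i ny).1 hy.
  apply: (cmp_curve h1 h2 (halpha i) p0); last exact: y0. lra.

split.
  move=> x y nx ny.
  case: (lerP m (mean x)) => hx; case: (lerP m (mean y)) => hy.
  - by left => i; rewrite ((cl x i nx).2 hx) ((cl y i ny).2 hy).
  - right => i; rewrite ((cl x i nx).2 hx).
    apply: (le_alpha ((cl y i ny).1 hy) (halpha i)); first by rewrite p0 p1.
      lra.
    exact: ny.1.
  - left => i; rewrite ((cl y i ny).2 hy).
    apply: (le_alpha ((cl x i nx).1 hx) (halpha i)); first by rewrite p0 p1.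
      lra.
    exact: nx.1.
  - case: (lerP (mean x) (mean y)) => h.
      by left; apply: cmpc.
    by right; apply: cmpc => //; lra.
split.
  move=> x y nx ny xy i.
  have /andP[y0 y1] := ny.1 i.
  apply: le_trans (nx.2 i (y i) (ny.1 i)).
  rewrite /payoff /deviate eqxx -/(deviate x i (y i)).
  have /andP[a0 a1] := halpha i.
  apply: ler_pM; [exact: powR_ge0 | exact: powR_ge0 | | exact: lexx].
  apply: ge0_ler_powR; [lra | rewrite nnegrE; exact: grade_ge0 | | ].
    rewrite nnegrE grade_dev; apply: addr_ge0 => //.
    by rewrite le_max lexx orbT.
  rewrite /grade /deviate eqxx -/(deviate x i (y i)) lerD2l.
  apply: le_max2 => //; rewrite lerD2l lerN2 /mean ler_wpM2r //.
  apply: ler_sum => j _; rewrite /deviate; case: eqP => [-> //|_]; exact: xy.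
move=> k l xk xl kl [nk [hk [Sk [cSk [_ [zk pk]]]]]] [nl [hl [Sl [cSl [_ [zl pl]]]]]] i.
have hmean : mean xl < mean xk.
  rewrite ltNge; apply/negP => h.
  have le := cmpc xk xl nk nl hk hl h.
  have sub : Sl \subset Sk.
    apply/fintype.subsetP => j jl.
    apply/negPn/negP => jk.
    have := pk j jk; have := zl j jl; have := le j; lra.
  have := subset_leq_card sub.
  by rewrite cSk cSl leqNgt kl.
have le := cmpc xl xk nl nk hl hk (ltW hmean).
have /andP[xl0 _] := nl.1 i.
have [_ xk1] := NE_pos _ _ _ _ (halpha i) nk.
split; last by have := le i; lra.
have gk : grade m xk i = xk i + (m - mean xk) by rewrite /grade max_l //; lra.
have gl : grade m xl i = xl i + (m - mean xl) by rewrite /grade max_l //; lra.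
rewrite gk gl.
apply: (grade_strict ((cl xk i nk).1 hk) ((cl xl i nl).1 hl) (halpha i) p0) => //.
  lra.
Qed.
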